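(* There is an absolute constant $C$ such that the following holds. Let $\mathcal P$ be an uncertain point set in $\mathbb R^d$, $\varepsilon>0$, $\delta\in(0,1)$, and $T=\{z_1,\dots,z_m\}\subset\mathbb R^d$ a finite set such that for every traversal $Q$ the chosen median $m_Q$ is $\frac{\varepsilon}{1+\varepsilon}$-covered by some point of $T$. Let $\hat w_i=\Pr_Q[f_T(m_Q)=z_i]$ for $Q$ a uniformly random traversal. Draw $N\ge \frac{C}{\varepsilon^2}(d+\log\frac1\delta)$ independent uniformly random traversals $Q_1,\dots,Q_N$ and let $c_i=\frac1N|\{t: f_T(m_{Q_t})=z_i\}|$. Then $$\Pr\Big[\max_{1\le i\le m}|c_i-\hat w_i|\le\varepsilon\Big]>1-\delta.$$
   Context: Each uncertain point $P_i$ ($i=1,\dots,n$) has $k$ equally likely locations $p_{i,1},\dots,p_{i,k}\in\mathbb R^d$; a uniformly random traversal picks independently for each $i$ a uniformly random location $q_i$ of $P_i$. $\mathrm{cost}(p,Q)=\frac1n\sum_i\|p-q_i\|$; an $L_1$ median of $Q$ minimizes $\mathrm{cost}(\cdot,Q)$; $Q\mapsto m_Q$ is a fixed rule selecting one $L_1$ median of each traversal. $\widehat{\mathrm{cost}}(x)=\frac1n\sum_i\min_j\|x-p_{i,j}\|$. A point $z$ $\gamma$-covers $q$ if $\|z-q\|\le\gamma\,\widehat{\mathrm{cost}}(z)$. $f_T(q)$ is the point $z\in T$ minimizing $\|q-z\|$ among those $z\in T$ that $\frac{\varepsilon}{1+\varepsilon}$-cover $q$, ties broken by lexicographically smallest coordinates.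 *)

(* Defs.v *)
From Stdlib Require Import Reals ClassicalEpsilon.
From mathcomp Require Import all_boot.

Set Implicit Arguments.
Unset Strict Implicit.
Unset Printing Implicit Defensive.

Local Open Scope R_scope.

Definition point (d : nat) := 'I_d -> R.

Definition dist {d : nat} (x y : point d) : R :=
  sqrt (\big[Rplus/0]_(j < d) ((x j - y j) * (x j - y j))).

Definition ind (P : Prop) : R :=
  if excluded_middle_informative P then 1 else 0.

(* An uncertain point set: n uncertain points, each with k locations;
   p i j = p_{i,j}.  A traversal picks a location index for each i. *)
Definition traversal (n k : nat) := {ffun 'I_n -> 'I_k}.

Definition cost {d n k : nat} (p : 'I_n -> 'I_k -> point d)
  (x : point d) (Q : traversal n k) : R :=
  / INR n * \big[Rplus/0]_(i < n) dist x (p i (Q i)).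

Definition min_list (l : seq R) : R :=
  match l with [::] => 0 | a :: l' => foldr Rmin a l' end.

Definition hatcost {d n k : nat} (p : 'I_n -> 'I_k -> point d) (x : point d) : R :=
  / INR n * \big[Rplus/0]_(i < n) min_list [seq dist x (p i j) | j <- enum 'I_k].

Definition covers {d n k : nat} (p : 'I_n -> 'I_k -> point d)
  (gamma : R) (z q : point d) : Prop :=
  dist z q <= gamma * hatcost p z.

Definition lex_le {d : nat} (x y : point d) : Prop :=
  (forall c, x c = y c) \/
  exists c : 'I_d, (forall c' : 'I_d, (c' < c)%N -> x c' = y c') /\ x c < y c.

Definition fT_is {d n k m : nat} (p : 'I_n -> 'I_k -> point d) (eps : R)
  (z : 'I_m -> point d) (q : point d) (i : 'I_m) : Prop :=
  covers p (eps / (1 + eps)) (z i) q /\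
  forall j : 'I_m, covers p (eps / (1 + eps)) (z j) q ->
    dist q (z i) < dist q (z j) \/
    (dist q (z i) = dist q (z j) /\ lex_le (z i) (z j)).

Definition is_median {d n k : nat} (p : 'I_n -> 'I_k -> point d)
  (Q : traversal n k) (x : point d) : Prop :=
  forall y : point d, cost p x Q <= cost p y Q.

Definition what {d n k m : nat} (p : 'I_n -> 'I_k -> point d) (eps : R)
  (z : 'I_m -> point d) (med : traversal n k -> point d) (i : 'I_m) : R :=
  (\big[Rplus/0]_(Q : traversal n k) ind (fT_is p eps z (med Q) i))
  / INR #|{: traversal n k}|.

Definition cfreq {d n k m N : nat} (p : 'I_n -> 'I_k -> point d) (eps : R)
  (z : 'I_m -> point d) (med : traversal n k -> point d)
  (S : {ffun 'I_N -> traversal n k}) (i : 'I_m) : R :=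
  (\big[Rplus/0]_(t < N) ind (fT_is p eps z (med (S t)) i)) / INR N.

Definition prob_samples {n k N : nat}
  (E : {ffun 'I_N -> traversal n k} -> Prop) : R :=
  (\big[Rplus/0]_(S : {ffun 'I_N -> traversal n k}) ind (E S))
  / INR #|{: {ffun 'I_N -> traversal n k}}|.

(* Main.v *)
Require Import Defs.
From Stdlib Require Import Reals Lra Lia Psatz.
Open Scope R_scope.

Ltac nz := repeat split; try (apply Rgt_not_eq; lra); try (apply Rlt_not_eq; lra); try lra.

Lemma exp_le_mono x y : x <= y -> exp x <= exp y.
Proof. intros [H|H]; [left; apply exp_increasing; auto| subst; lra]. Qed.

Lemma ln_ge_1_inv w : 0 < w -> 1 - / w <= ln w.
Proof.
  intros Hw. assert (H := exp_ineq1_le (ln (/ w))).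
  rewrite exp_ln in H by (apply Rinv_0_lt_compat; lra).
  rewrite ln_Rinv in H by lra. lra.
Qed.

Lemma KL a w : 1 <= a -> 0 < w <= 1 -> exp (- a / w) <= w * exp (- a).
Proof.
  intros Ha Hw.
  assert (H1 := ln_ge_1_inv w (proj1 Hw)).
  assert (Hiw : 1 <= / w).
  { rewrite <- Rinv_1. apply Rinv_le_contravar; lra. }
  assert (- a / w <= - a + ln w).
  { unfold Rdiv. assert (- a * / w = - a + a * (1 - / w)) by (field; nz).
    rewrite H. assert (a * (1 - / w) <= 1 * (1 - / w)) by nra. lra. }
  apply Rle_trans with (exp (- a + ln w)). apply exp_le_mono; auto.
  rewrite exp_plus, exp_ln by lra. lra.
Qed.

Lemma exp_up_half l : 0 <= l <= / 2 -> exp l <= 1 + l + 2 * l ^ 2.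
Proof.
  intros Hl. assert (H := exp_ineq1_le (- l)). rewrite exp_Ropp in H.
  assert (He := exp_pos l).
  assert (H2 : (1 - l) * exp l <= 1).
  { apply Rmult_le_compat_r with (r := exp l) in H; [|lra].
    rewrite Rinv_l in H by nz. nra. }
  assert (H3 : (1 - l) * (1 + l + 2 * l ^ 2) = 1 + l^2 * (1 - 2 * l)) by ring.
  assert (0 <= l^2 * (1 - 2*l)) by (apply Rmult_le_pos; nra).
  apply Rmult_le_reg_l with (1 - l); [lra|]. nra.
Qed.

Lemma exp_down l : 0 <= l -> exp (- l) <= 1 - l + l ^ 2.
Proof.
  intros Hl. rewrite exp_Ropp. assert (H := exp_ineq1_le l).
  assert (He := exp_pos l).
  assert ((1 + l) * (1 - l + l^2) = 1 + l ^ 3) by ring.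
  assert (0 <= l^3) by (apply pow_le; lra).
  apply Rmult_le_reg_l with (exp l); auto. rewrite Rinv_r by nz.
  assert (0 < 1 - l + l^2) by nra.
  assert (0 <= (exp l - (1 + l)) * (1 - l + l^2)) by (apply Rmult_le_pos; lra).
  nra.
Qed.

Lemma inv_le_exp e : 0 < e -> / e <= exp (/ e - 1).
Proof. intros. assert (H1 := exp_ineq1_le (/ e - 1)). lra. Qed.

Lemma upper_real N eps w : 0 < N -> 0 < eps <= 1 -> 0 < w <= 1 -> 80 <= N * eps^2 ->
  exists l, 0 < l /\
    exp (N * (w * (exp l - 1) - l * (w + eps))) <= w * exp (3 - N * eps^2 / 8).
Proof.
  intros HN He Hw HA.
  set (A := N * eps^2) in *.
  assert (Hrho : forall x, x <= - A / 8 -> exp x <= exp (3 - A / 8)) by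
    (intros; apply exp_le_mono; lra).
  destruct (Rle_lt_dec (eps / 2) w) as [Rg1|Rg1].
  -
    exists (eps / (4 * w)). split. apply Rdiv_lt_0_compat; lra.
    set (l := eps / (4 * w)).
    assert (Hl : 0 <= l <= / 2).
    { unfold l; split. left; apply Rdiv_lt_0_compat; lra.
      apply Rmult_le_reg_r with (4 * w); [lra|]. unfold Rdiv. rewrite Rmult_assoc, Rinv_l by nz. lra. }
    assert (Hex := exp_up_half l Hl).
    assert (E : N * (2 * w * l ^ 2 - l * eps) = - (A / 8) / w).
    { unfold l, A. field. lra. }
    apply Rle_trans with (exp (- (A / 8) / w)).
    { apply exp_le_mono. rewrite <- E. apply Rmult_le_compat_l; [lra|].
      assert (w * (exp l - 1) <= w * (l + 2 * l ^ 2)) by (apply Rmult_le_compat_l; lra).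
      nra. }
    apply Rle_trans with (w * exp (- (A / 8))). apply KL; lra.
    apply Rmult_le_compat_l; [lra|]. apply exp_le_mono; lra.
  - assert (Hpos : 0 < eps / w) by (apply Rdiv_lt_0_compat; lra).
    assert (Hinv := inv_le_exp eps (proj1 He)).
    assert (Hie : 1 <= / eps) by (rewrite <- Rinv_1; apply Rinv_le_contravar; lra).
    assert (HNe : N * eps = A * / eps) by (unfold A; field; nz).
    destruct (Rle_lt_dec 2 (ln (eps / w))) as [Rg2|Rg2].
    +
      exists (ln (eps / w)). split. lra.
      set (l := ln (eps / w)). assert (Hl2 : 2 <= l) by (unfold l; lra). assert (El : exp l = eps / w) by (unfold l; apply exp_ln; auto). clearbody l.
      idtac.
      assert (Hb : N * (w * (exp l - 1) - l * (w + eps)) <= - l - N * eps + 2).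
      { rewrite El. assert (w * (eps / w - 1) = eps - w) by (field; nz).
        rewrite H. assert (0 <= l * w) by (apply Rmult_le_pos; lra).
        assert (N * (eps - l * eps) <= - l - N * eps + 2).
        { assert (N*eps*(l-2) >= 1*(l - 2)).
          { apply Rle_ge, Rmult_le_compat_r; [lra|]. rewrite HNe.
            assert (A * / eps >= A * 1) by (apply Rle_ge, Rmult_le_compat_l; lra). lra. }
          nra. }
        nra. }
      apply Rle_trans with (exp (- l - N * eps + 2)). apply exp_le_mono; auto.
      replace (- l - N * eps + 2) with (- l + (2 - N * eps)) by ring.
      rewrite exp_plus, exp_Ropp, El.
      assert (Ew : / (eps / w) = w * / eps) by (field; nz). rewrite Ew.
      rewrite Rmult_assoc. apply Rmult_le_compat_l; [lra|].
      apply Rle_trans with (exp (/ eps - 1) * exp (2 - N * eps)).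
      apply Rmult_le_compat_r; [left; apply exp_pos| auto].
      rewrite <- exp_plus. apply exp_le_mono. rewrite HNe.
      assert ((A - 1) * / eps >= (A - 1) * 1) by (apply Rle_ge, Rmult_le_compat_l; lra).
      nra.
    +
      exists 1. split. lra.
      assert (H3 := exp_le_3).
      assert (Hw3 : eps / w < exp 2).
      { rewrite <- (exp_ln (eps / w)) by auto. apply exp_increasing; auto. }
      assert (Hb : N * (w * (exp 1 - 1) - 1 * (w + eps)) <= - (N * eps) / 2).
      { assert (w * (exp 1 - 2) <= w * 1) by (apply Rmult_le_compat_l; lra). nra. }
      apply Rle_trans with (exp (- (N * eps) / 2)). apply exp_le_mono; auto.
      assert (Hw2 : 1 <= exp 2 * w * / eps).
      { apply Rmult_lt_compat_r with (r := w) in Hw3; [|lra].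
        unfold Rdiv in Hw3. rewrite Rmult_assoc, Rinv_l, Rmult_1_r in Hw3 by nz.
        apply Rmult_le_reg_r with eps; [lra|]. rewrite Rmult_assoc, Rinv_l by nz. lra. }
      apply Rle_trans with (exp 2 * w * / eps * exp (- (N * eps) / 2)).
      { rewrite <- (Rmult_1_l (exp (- (N * eps) / 2))) at 1.
        apply Rmult_le_compat_r; [left; apply exp_pos| auto]. }
      replace (exp 2 * w * / eps * exp (- (N * eps) / 2)) with
        (w * (exp 2 * / eps * exp (- (N * eps) / 2))) by ring.
      apply Rmult_le_compat_l; [lra|].
      apply Rle_trans with (exp 2 * exp (/ eps - 1) * exp (- (N * eps) / 2)).
      { apply Rmult_le_compat_r; [left; apply exp_pos|].
        apply Rmult_le_compat_l; [left; apply exp_pos| auto]. }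
      rewrite <- !exp_plus. apply exp_le_mono. rewrite HNe.
      assert ((A/2 - 1) * / eps >= (A/2 - 1) * 1) by (apply Rle_ge, Rmult_le_compat_l; lra).
      nra.
Qed.

Lemma lower_real N eps w : 0 < N -> 0 < eps -> eps <= w <= 1 -> 80 <= N * eps^2 ->
  exists l, 0 < l /\
    exp (l * (N * (w - eps)) + N * (w * (exp (- l) - 1)))
      <= w * exp (3 - N * eps^2 / 8).
Proof.
  intros HN He Hw HA. set (A := N * eps^2) in *.
  exists (eps / (2 * w)). split. apply Rdiv_lt_0_compat; lra.
  set (l := eps / (2 * w)).
  assert (Hl : 0 <= l) by (unfold l; left; apply Rdiv_lt_0_compat; lra).
  assert (Hex := exp_down l Hl).
  assert (E : N * (w * l ^ 2 - l * eps) = - (A / 4) / w) by (unfold l, A; field; nz).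
  apply Rle_trans with (exp (- (A / 4) / w)).
  { apply exp_le_mono. rewrite <- E.
    assert (w * (exp (- l) - 1) <= w * (- l + l ^ 2)) by (apply Rmult_le_compat_l; lra).
    nra. }
  apply Rle_trans with (w * exp (- (A / 4))). apply KL; lra.
  apply Rmult_le_compat_l; [lra|]. apply exp_le_mono; lra.
Qed.
From HB Require Import structures.
From Stdlib Require Import ClassicalEpsilon.
From mathcomp Require Import all_boot.
Set Implicit Arguments. Unset Strict Implicit.
Local Open Scope R_scope.


Lemma Rplus_assoc' : associative Rplus. Proof. move=>*; ring. Qed.
Lemma Rmult_assoc' : associative Rmult. Proof. move=>*; ring. Qed.
HB.instance Definition _ := Monoid.isComLaw.Build R 0 Rplus Rplus_assoc' Rplus_comm Rplus_0_l.
HB.instance Definition _ := Monoid.isComLaw.Build R 1 Rmult Rmult_assoc' Rmult_comm Rmult_1_l.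
HB.instance Definition _ := Monoid.isMulLaw.Build R 0 Rmult Rmult_0_l Rmult_0_r.
HB.instance Definition _ := Monoid.isAddLaw.Build R Rmult Rplus Rmult_plus_distr_r Rmult_plus_distr_l.

Lemma sum_le (I : finType) (F G : I -> R) :
  (forall i, F i <= G i) -> \big[Rplus/0]_(i : I) F i <= \big[Rplus/0]_(i : I) G i.
Proof. move=> H; apply: (big_ind2 (fun x y => x <= y)) => //; [lra | move=> *; lra]. Qed.

Lemma sum_ge0 (I : finType) (F : I -> R) :
  (forall i, 0 <= F i) -> 0 <= \big[Rplus/0]_(i : I) F i.
Proof. move=> H; apply: (big_ind (fun x => 0 <= x)) => //; [lra | move=> *; lra]. Qed.

Lemma sum_const (I : finType) (c : R) : \big[Rplus/0]_(i : I) c = INR #|{: I}| * c.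
Proof.
  rewrite big_const. have -> : #|{: I}| = #|I| by [].
  elim: #|I| => [|n IH]; first by rewrite /=; lra. rewrite [iter _ _ _]/= IH S_INR; lra.
Qed.

Lemma sum_scale (I : finType) (a : R) (F : I -> R) :
  \big[Rplus/0]_(i : I) (a * F i) = a * \big[Rplus/0]_(i : I) F i.
Proof. by rewrite big_distrr. Qed.

Lemma exp_sum (I : finType) (F : I -> R) :
  exp (\big[Rplus/0]_(i : I) F i) = \big[Rmult/1]_(i : I) exp (F i).
Proof. apply: (big_morph exp exp_plus exp_0). Qed.

Lemma mgf (T I : finType) (g : T -> R) :
  \big[Rplus/0]_(S : {ffun I -> T}) \big[Rmult/1]_(t : I) g (S t)
  = (\big[Rplus/0]_(q : T) g q) ^ #|I|.
Proof.
  rewrite -(@bigA_distr_bigA R 0 1 Rmult Rplus _ _ (fun _ q => g q)) /=.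
  rewrite big_const. elim: #|I| => [|n IH] //=. by rewrite IH.
Qed.

Lemma ind_01 (P : Prop) : Defs.ind P = 0 \/ Defs.ind P = 1.
Proof. rewrite /Defs.ind; case: excluded_middle_informative; auto. Qed.
Lemma ind_T (P : Prop) : P -> Defs.ind P = 1.
Proof. move=> HP; rewrite /Defs.ind; case: excluded_middle_informative => // H; by case: (H HP). Qed.
Lemma ind_F (P : Prop) : ~ P -> Defs.ind P = 0.
Proof. move=> HP; rewrite /Defs.ind; case: excluded_middle_informative => // H; by case: (HP H). Qed.

Section Gen.
Variables (T : finType) (X : T -> R) (N : nat).
Hypothesis HX : forall q, X q = 0 \/ X q = 1.
Hypothesis HT : (0 < #|T|)%N.
Hypothesis HN : (0 < N)%N.

Definition KT := INR #|{: T}|.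
Definition wbar := (\big[Rplus/0]_(q : T) X q) / KT.
Definition cnt (S : {ffun 'I_N -> T}) := \big[Rplus/0]_(t < N) X (S t).
Definition PS (E : {ffun 'I_N -> T} -> Prop) :=
  (\big[Rplus/0]_(S : {ffun 'I_N -> T}) Defs.ind (E S)) / INR #|{: {ffun 'I_N -> T}}|.

Lemma KT_pos : 0 < KT.
Proof. rewrite /KT; apply: lt_0_INR; apply/ltP; exact: HT. Qed.

Lemma X01 q : 0 <= X q <= 1.
Proof. case: (HX q) => ->; lra. Qed.

Lemma INR_expn (a n : nat) : INR (a ^ n)%N = INR a ^ n.
Proof. elim: n => [|n IH] //=; by rewrite expnS mult_INR IH. Qed.

Lemma card_ffR : INR #|{: {ffun 'I_N -> T}}| = KT ^ N.
Proof. by rewrite card_ffun card_ord INR_expn. Qed.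

Lemma cardff_pos : 0 < INR #|{: {ffun 'I_N -> T}}|.
Proof. rewrite card_ffR; apply: pow_lt; exact: KT_pos. Qed.

Lemma wbar01 : 0 <= wbar <= 1.
Proof.
  have HK := KT_pos. rewrite /wbar; split.
  - apply: Rmult_le_pos; last by left; apply: Rinv_0_lt_compat.
    apply: sum_ge0 => q; case: (X01 q); lra.
  - apply: (Rmult_le_reg_r KT) => //. rewrite /Rdiv Rmult_assoc Rinv_l; last lra.
    rewrite Rmult_1_r Rmult_1_l /KT -(Rmult_1_r (INR _)) -sum_const.
    apply: sum_le => q; case: (X01 q); lra.
Qed.

Lemma cnt_bounds S : 0 <= cnt S <= INR N.
Proof.
  rewrite /cnt; split.
  - apply: sum_ge0 => t; case: (X01 (S t)); lra.
  - have -> : INR N = \big[Rplus/0]_(t < N) 1.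
      by rewrite sum_const card_ord; lra.
    apply: sum_le => t; case: (X01 (S t)); lra.
Qed.

Lemma PS_mono (E1 E2 : {ffun 'I_N -> T} -> Prop) :
  (forall S, E1 S -> E2 S) -> PS E1 <= PS E2.
Proof.
  move=> H; rewrite /PS /Rdiv; apply: Rmult_le_compat_r.
    by left; apply: Rinv_0_lt_compat; exact: cardff_pos.
  apply: sum_le => S; rewrite /Defs.ind.
  case: excluded_middle_informative => H1; case: excluded_middle_informative => H2 /=; try lra.
  exfalso; exact: H2 (H _ H1).
Qed.

Lemma PS_empty (E : {ffun 'I_N -> T} -> Prop) : (forall S, ~ E S) -> PS E = 0.
Proof.
  move=> H; rewrite /PS big1; first by rewrite /Rdiv Rmult_0_l.
  by move=> S _; apply: ind_F.
Qed.

Lemma pow_exp (x : R) (n : nat) : exp x ^ n = exp (INR n * x).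
Proof.
  elim: n => [|n IH]; first by rewrite /= Rmult_0_l exp_0.
  by rewrite [exp x ^ _]/= IH S_INR -exp_plus; congr exp; ring.
Qed.

Lemma chernoff (mu r : R) :
  PS (fun S => mu * (cnt S - r) > 0) <= exp (- mu * r + INR N * (wbar * (exp mu - 1))).
Proof.
  have HK := KT_pos. have Hc := cardff_pos.
  apply: (Rle_trans _ ((\big[Rplus/0]_(S : {ffun 'I_N -> T})
             (exp (- mu * r) * \big[Rmult/1]_(t < N) exp (mu * X (S t))))
             / INR #|{: {ffun 'I_N -> T}}|)).
  { rewrite /PS /Rdiv; apply: Rmult_le_compat_r; first by left; apply: Rinv_0_lt_compat.
    apply: sum_le => S. rewrite -exp_sum -exp_plus.
    have -> : - mu * r + \big[Rplus/0]_(t < N) (mu * X (S t)) = mu * (cnt S - r).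
      rewrite sum_scale /cnt; change (- mu * r + mu * \big[Rplus/0]_(t < N) X (S t) = mu * (\big[Rplus/0]_(t < N) X (S t) - r)); ring.
    rewrite /Defs.ind; case: excluded_middle_informative => H /=.
    - have := exp_ineq1_le (mu * (cnt S - r)); lra.
    - left; exact: exp_pos. }
  rewrite sum_scale (@mgf _ _ (fun q => exp (mu * X q))) card_ord card_ffR.
  have Hq : \big[Rplus/0]_(q : T) exp (mu * X q) = KT * (1 + wbar * (exp mu - 1)).
  { have -> : \big[Rplus/0]_(q : T) exp (mu * X q)
             = \big[Rplus/0]_(q : T) (1 + (exp mu - 1) * X q).
      apply: eq_bigr => q _; case: (HX q) => ->.
      - by rewrite Rmult_0_r exp_0; ring.
      - by rewrite Rmult_1_r; ring.
    rewrite big_split /= sum_const sum_scale /wbar -/KT; field; lra. }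
  rewrite Hq Rpow_mult_distr /Rdiv Rmult_assoc.
  rewrite (Rmult_comm (KT ^ N)) Rmult_assoc Rinv_r; last by apply: pow_nonzero; lra.
  rewrite Rmult_1_r exp_plus; apply: Rmult_le_compat_l; first by left; exact: exp_pos.
  rewrite -pow_exp; apply: pow_incr; split.
  - have [H0 H1] := wbar01; have := exp_pos mu; nra.
  - exact: exp_ineq1_le.
Qed.

Lemma sum_ge0P (I : finType) (P : pred I) (F : I -> R) :
  (forall i, 0 <= F i) -> 0 <= \big[Rplus/0]_(i | P i) F i.
Proof. move=> H; apply: (big_ind (fun x => 0 <= x)) => //; [lra | move=> *; lra]. Qed.

Lemma sum0_all (I : finType) (F : I -> R) :
  (forall i, 0 <= F i) -> \big[Rplus/0]_(i : I) F i = 0 -> forall i, F i = 0.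
Proof.
  move=> H0 Hs i; move: Hs; rewrite (bigD1 i) //= => Hs.
  have := sum_ge0P (fun j => j != i) H0; have := H0 i; lra.
Qed.

Lemma INR_N_pos : 0 < INR N.
Proof. apply: lt_0_INR; apply/ltP; exact: HN. Qed.

Lemma cfr_bounds S : 0 <= cnt S / INR N <= 1.
Proof.
  have HNr := INR_N_pos. have [c0 c1] := cnt_bounds S. split.
  - apply: Rmult_le_pos => //; left; exact: Rinv_0_lt_compat.
  - apply: (Rmult_le_reg_r (INR N)) => //.
    rewrite /Rdiv Rmult_assoc Rinv_l; lra.
Qed.

Lemma upper (eps : R) : 0 < eps -> 80 <= INR N * eps ^ 2 ->
  PS (fun S => cnt S / INR N - wbar > eps) <= wbar * exp (3 - INR N * eps ^ 2 / 8).
Proof.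
  move=> He HA. have [w0 w1] := wbar01. have HNr := INR_N_pos. have HK := KT_pos.
  case: (Req_dec wbar 0) => Hw0.
  - rewrite PS_empty; first by rewrite Hw0; lra.
    move=> S H.
    have HX0 : forall q, X q = 0.
    { apply: sum0_all; first by move=> q; case: (X01 q).
      move: Hw0; rewrite /wbar /Rdiv => Hw0.
      have := Rmult_integral _ _ Hw0; case => // Hi.
      have := Rinv_neq_0_compat KT; lra. }
    move: H; rewrite /cnt big1 => [|t _]; last exact: HX0.
    rewrite Hw0 /Rdiv Rmult_0_l; lra.
  - case: (Rle_lt_dec eps 1) => He1.
    + have [l [Hl Hb]] := @upper_real (INR N) eps wbar HNr (conj He He1) (conj (ltac:(lra) : 0 < wbar) w1) HA.
      apply: Rle_trans; first apply: (@PS_mono _ (fun S => l * (cnt S - INR N * (wbar + eps)) > 0)).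
      { move=> S H. apply: Rmult_lt_0_compat => //.
        have E : cnt S = (cnt S / INR N) * INR N by field; lra.
        rewrite E; nra. }
      apply: Rle_trans; first exact: chernoff.
      apply: Rle_trans Hb; right; congr exp; ring.
    + rewrite PS_empty; first by apply: Rmult_le_pos => //; left; exact: exp_pos.
      move=> S H; have := cfr_bounds S; lra.
Qed.

Lemma lower (eps : R) : 0 < eps -> 80 <= INR N * eps ^ 2 ->
  PS (fun S => wbar - cnt S / INR N > eps) <= wbar * exp (3 - INR N * eps ^ 2 / 8).
Proof.
  move=> He HA. have [w0 w1] := wbar01. have HNr := INR_N_pos.
  case: (Rlt_le_dec wbar eps) => Hwe.
  - rewrite PS_empty; first by apply: Rmult_le_pos => //; left; exact: exp_pos.
    move=> S H; have := cfr_bounds S; lra.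
  - have [l [Hl Hb]] := @lower_real (INR N) eps wbar HNr He (conj Hwe w1) HA.
    apply: Rle_trans; first apply: (@PS_mono _ (fun S => (- l) * (cnt S - INR N * (wbar - eps)) > 0)).
    { move=> S H.
      have E : cnt S = (cnt S / INR N) * INR N by field; lra.
      have : cnt S - INR N * (wbar - eps) < 0 by rewrite E; nra.
      nra. }
    apply: Rle_trans; first exact: chernoff.
    apply: Rle_trans Hb; right; congr exp; ring.
Qed.

End Gen.

Lemma union_bound (O I : finType) (G : O -> Prop) (U L : I -> O -> Prop) :
  (0 < #|O|)%N ->
  (forall S, ~ G S -> exists i, U i S \/ L i S) ->
  1 - \big[Rplus/0]_(i : I) ((\big[Rplus/0]_(S : O) Defs.ind (U i S)) / INR #|{: O}|
                          + (\big[Rplus/0]_(S : O) Defs.ind (L i S)) / INR #|{: O}|)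
  <= (\big[Rplus/0]_(S : O) Defs.ind (G S)) / INR #|{: O}|.
Proof.
  move=> HO H.
  have Hc : 0 < INR #|{: O}| by apply: lt_0_INR; apply/ltP.
  have Hpt : forall S, 1 - \big[Rplus/0]_(i : I) (Defs.ind (U i S) + Defs.ind (L i S))
                       <= Defs.ind (G S).
  { move=> S. have Hnn : forall i, 0 <= Defs.ind (U i S) + Defs.ind (L i S).
      by move=> i; case: (ind_01 (U i S)) => ->; case: (ind_01 (L i S)) => ->; lra.
    case: (classic (G S)) => HG.
    - rewrite ind_T //. have := sum_ge0 Hnn; lra.
    - rewrite ind_F //. have [i Hi] := H S HG.
      rewrite (bigD1 i) //=. have := sum_ge0P (fun j => j != i) Hnn.
      have : 1 <= Defs.ind (U i S) + Defs.ind (L i S).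
      { case: Hi => Hi; [rewrite (ind_T Hi) | rewrite (ind_T Hi)];
        [case: (ind_01 (L i S)) => -> | case: (ind_01 (U i S)) => ->]; lra. }
      lra. }
  have Hsum := sum_le Hpt.
  have E1 : \big[Rplus/0]_(S : O) (1 - \big[Rplus/0]_(i : I) (Defs.ind (U i S) + Defs.ind (L i S)))
      = INR #|{: O}| - \big[Rplus/0]_(i : I) (\big[Rplus/0]_(S : O) Defs.ind (U i S)
                                             + \big[Rplus/0]_(S : O) Defs.ind (L i S)).
  { rewrite /Rminus big_split /= sum_const Rmult_1_r.
    have -> : \big[Rplus/0]_(S : O) (- \big[Rplus/0]_(i : I) (Defs.ind (U i S) + Defs.ind (L i S)))
            = -1 * \big[Rplus/0]_(S : O) \big[Rplus/0]_(i : I) (Defs.ind (U i S) + Defs.ind (L i S)).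
      by rewrite -sum_scale; apply: eq_bigr => S _; ring.
    rewrite exchange_big /=.
    have -> : \big[Rplus/0]_(i : I) \big[Rplus/0]_(S : O) (Defs.ind (U i S) + Defs.ind (L i S))
      = \big[Rplus/0]_(i : I) (\big[Rplus/0]_(S : O) Defs.ind (U i S)
                                + \big[Rplus/0]_(S : O) Defs.ind (L i S)).
      by apply: eq_bigr => i _; rewrite big_split.
    ring. }
  rewrite E1 in Hsum.
  have E2 : \big[Rplus/0]_(i : I) ((\big[Rplus/0]_(S : O) Defs.ind (U i S)) / INR #|{: O}|
                          + (\big[Rplus/0]_(S : O) Defs.ind (L i S)) / INR #|{: O}|)
    = / INR #|{: O}| * \big[Rplus/0]_(i : I) (\big[Rplus/0]_(S : O) Defs.ind (U i S)
                                             + \big[Rplus/0]_(S : O) Defs.ind (L i S)).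
  { rewrite -sum_scale; apply: eq_bigr => i _; rewrite /Rdiv; ring. }
  rewrite E2.
  apply: (Rmult_le_reg_r (INR #|{: O}|)) => //.
  rewrite /Rdiv Rmult_assoc Rinv_l; last lra.
  have -> : (1 - / INR #|{: O}| * \big[Rplus/0]_(i : I) (\big[Rplus/0]_(S : O) Defs.ind (U i S)
                                             + \big[Rplus/0]_(S : O) Defs.ind (L i S))) * INR #|{: O}|
     = INR #|{: O}| - \big[Rplus/0]_(i : I) (\big[Rplus/0]_(S : O) Defs.ind (U i S)
                                             + \big[Rplus/0]_(S : O) Defs.ind (L i S)).
    by field; lra.
  lra.
Qed.

Lemma sum_ind_le1 (I : finType) (P : I -> Prop) :
  (forall i j, P i -> P j -> i = j) -> \big[Rplus/0]_(i : I) Defs.ind (P i) <= 1.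
Proof.
  move=> H. case: (classic (exists i, P i)) => [[i Hi]|Hn].
  - rewrite (bigD1 i) //= ind_T // big1; first lra.
    move=> j Hj; apply: ind_F => Pj. by move: Hj; rewrite (H _ _ Pj Hi) eqxx.
  - rewrite big1; first lra. move=> j _; apply: ind_F => Pj; apply: Hn; by exists j.
Qed.

Lemma min_list_ge0 (I : Type) (s : seq I) (f : I -> R) :
  (forall j, 0 <= f j) -> 0 <= min_list [seq f j | j <- s].
Proof.
  move=> H; case: s => [|a s] /=; first lra.
  elim: s => [|b s IH] /=; first exact: H.
  apply: Rmin_glb => //.
Qed.

Lemma dist_ge0 (d : nat) (x y : point d) : 0 <= Defs.dist x y.
Proof. exact: sqrt_pos. Qed.

Lemma hatcost_ge0 (d n k : nat) (p : 'I_n -> 'I_k -> point d) x :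
  (0 < n)%N -> 0 <= hatcost p x.
Proof.
  move=> Hn; rewrite /hatcost; apply: Rmult_le_pos.
  - left; apply: Rinv_0_lt_compat; apply: lt_0_INR; apply/ltP; exact: Hn.
  - apply: sum_ge0 => i; apply: min_list_ge0 => j; exact: dist_ge0.
Qed.

Lemma fT_unique (d n k m : nat) (p : 'I_n -> 'I_k -> point d) eps (z : 'I_m -> point d) q :
  (forall i j : 'I_m, i <> j -> exists c : 'I_d, z i c <> z j c) ->
  forall i j, fT_is p eps z q i -> fT_is p eps z q j -> i = j.
Proof.
  move=> Hd i j [Ci Mi] [Cj Mj].
  case: (eqVneq i j) => // /eqP Hne; exfalso.
  have [c0 Hc0] := Hd i j Hne.
  case: (Mi j Cj) => [Hlt|[Heq Hlij]]; case: (Mj i Ci) => [Hlt'|[Heq' Hlji]]; try lra.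
  case: Hlij => [Hall|[c1 [P1 L1]]]; first by apply: Hc0; apply: Hall.
  case: Hlji => [Hall|[c2 [P2 L2]]]; first by apply: Hc0; rewrite Hall.
  case: (ltngtP c1 c2) => H12.
  - have := P2 c1 H12; lra.
  - have := P1 c2 H12; lra.
  - have E : c1 = c2 by apply: val_inj. subst c2; lra.
Qed.

Theorem mainTheorem8 :
  exists C : R, 0 < C /\
  forall (d n k : nat) (p : 'I_n -> 'I_k -> point d) (eps delta : R)
         (m : nat) (z : 'I_m -> point d) (med : traversal n k -> point d)
         (N : nat),
    (0 < n)%N -> (0 < k)%N ->
    0 < eps -> 0 < delta < 1 ->
    (* T = {z_1,...,z_m} is a set of m distinct points *)
    (forall i j : 'I_m, i <> j -> exists c : 'I_d, z i c <> z j c) ->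
    (* Q |-> m_Q selects an L1 median of each traversal *)
    (forall Q : traversal n k, is_median p Q (med Q)) ->
    (* every chosen median is eps/(1+eps)-covered by some point of T *)
    (forall Q : traversal n k, exists i : 'I_m,
        covers p (eps / (1 + eps)) (z i) (med Q)) ->
    INR N >= C / (eps * eps) * (INR d + ln (/ delta)) ->
    prob_samples (fun S : {ffun 'I_N -> traversal n k} =>
      forall i : 'I_m,
        Rabs (cfreq p eps z med S i - what p eps z med i) <= eps)
    > 1 - delta.
Proof.
  exists 80; split; first lra.
  move=> d n k p eps delta m z med N Hn Hk He [Hd0 Hd1] Hdist _ _ HNb.
  have HL : 0 < ln (/ delta).
  { rewrite ln_Rinv //. have := ln_increasing delta 1 Hd0 Hd1. rewrite ln_1; lra. }
  have HA : INR N * eps ^ 2 >= 80 * (INR d + ln (/ delta)).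
  { have -> : 80 * (INR d + ln (/ delta)) = 80 / (eps * eps) * (INR d + ln (/ delta)) * eps ^ 2.
      by field; lra.
    have := pos_INR d. have : 0 < eps ^ 2 by apply: pow_lt. nra. }
  have HNpos : (0 < N)%N.
  { have := pos_INR d. have : 0 < eps ^ 2 by apply: pow_lt.
    case E: N => [|N'] // h1 h2; move: HA; rewrite E /= Rmult_0_l; nra. }
  have HT : (0 < #|traversal n k|)%N.
  { by rewrite card_ffun !card_ord expn_gt0 Hk. }
  have Hc : 0 < INR #|{: {ffun 'I_N -> traversal n k}}|.
  { by apply: (@cardff_pos (traversal n k) N). }
  clear HNb; case: d p z med Hdist HA => [|d] p z med Hdist HA.
  - (* d = 0 : everything is at distance 0 *)
    have D0 : forall x y : point 0, Defs.dist x y = 0.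
      by move=> x y; rewrite /Defs.dist big_ord0 sqrt_0.
    have Hf : forall q i, fT_is p eps z q i.
    { move=> q i; split.
      - rewrite /covers D0; apply: Rmult_le_pos; last exact: hatcost_ge0.
        apply: Rmult_le_pos; first lra. left; apply: Rinv_0_lt_compat; lra.
      - move=> j _; right; split; first by rewrite !D0.
        by left; case. }
    have HNr : 0 < INR N by apply: lt_0_INR; apply/ltP.
    have HG : forall S : {ffun 'I_N -> traversal n k}, forall i : 'I_m,
        Rabs (cfreq p eps z med S i - what p eps z med i) <= eps.
    { move=> S i.
      have -> : cfreq p eps z med S i = 1.
      { rewrite /cfreq. under eq_bigr => t _ do rewrite ind_T //.
        rewrite sum_const card_ord; field; lra. }
      have -> : what p eps z med i = 1.
      { rewrite /what. under eq_bigr => t _ do rewrite ind_T //.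
        rewrite sum_const Rmult_1_r /Rdiv; apply: Rinv_r.
        apply: not_0_INR => H0; move: HT; by rewrite [#|_|]H0. }
      rewrite Rminus_diag Rabs_R0; lra. }
    rewrite /prob_samples. under eq_bigr => S _ do rewrite ind_T //.
    rewrite sum_const Rmult_1_r /Rdiv.
    have -> : forall x, 0 < x -> x * / x = 1 by move=> x hx; apply: Rinv_r; lra.
    - lra.
    - exact: Hc.
  -
    have Hd : 1 <= INR d.+1 by rewrite S_INR; have := pos_INR d; lra.
    set A := INR N * eps ^ 2.
    have HA80 : 80 <= A by rewrite /A; nra.
    set rho := exp (3 - A / 8).
    pose X (i : 'I_m) (q : traversal n k) := Defs.ind (fT_is p eps z (med q) i).
    have HX : forall i q, X i q = 0 \/ X i q = 1 by move=> i q; exact: ind_01.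
    have Hw : \big[Rplus/0]_(i : 'I_m) wbar (X i) <= 1.
    { have HK : 0 < KT (traversal n k) := @KT_pos _ HT.
      have -> : \big[Rplus/0]_(i : 'I_m) wbar (X i)
        = / KT (traversal n k) * \big[Rplus/0]_(q : traversal n k) \big[Rplus/0]_(i : 'I_m) X i q.
      { rewrite exchange_big /= -sum_scale; apply: eq_bigr => i _.
        rewrite /wbar /Rdiv Rmult_comm; reflexivity. }
      apply: (Rmult_le_reg_l (KT (traversal n k))) => //.
      rewrite -Rmult_assoc Rinv_r; last lra. rewrite Rmult_1_l Rmult_1_r /KT.
      rewrite -(Rmult_1_r (INR _)) -sum_const; apply: sum_le => q.
      apply: sum_ind_le1 => i j; exact: fT_unique. }
    have Hb := @union_bound _ 'I_m
      (fun S : {ffun 'I_N -> traversal n k} => forall i : 'I_m,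
          Rabs (cfreq p eps z med S i - what p eps z med i) <= eps)
      (fun i S => cnt (X i) S / INR N - wbar (X i) > eps)
      (fun i S => wbar (X i) - cnt (X i) S / INR N > eps).
    have Hb' := Hb ltac:(apply/ltP; apply: INR_lt; exact: Hc).
    have Hb'' := Hb' ltac:(move=> S HS; apply: NNPP => Hnn; apply: HS => i;
      change (Rabs (cnt (X i) S / INR N - wbar (X i)) <= eps);
      apply: Rabs_le; split; apply: Rnot_lt_le => Hc';
      [ apply: Hnn; exists i; right; lra
      | apply: Hnn; exists i; left; lra ]).
    have Hsum : \big[Rplus/0]_(i : 'I_m)
        ((\big[Rplus/0]_(S : {ffun 'I_N -> traversal n k})
             Defs.ind (cnt (X i) S / INR N - wbar (X i) > eps)) / INR #|{: {ffun 'I_N -> traversal n k}}|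
        + (\big[Rplus/0]_(S : {ffun 'I_N -> traversal n k})
             Defs.ind (wbar (X i) - cnt (X i) S / INR N > eps)) / INR #|{: {ffun 'I_N -> traversal n k}}|)
        <= 2 * rho.
    { apply: (Rle_trans _ (\big[Rplus/0]_(i : 'I_m) (2 * rho * wbar (X i)))).
      { apply: sum_le => i.
        have U : (\big[Rplus/0]_(S : {ffun 'I_N -> traversal n k})
             Defs.ind (cnt (X i) S / INR N - wbar (X i) > eps)) / INR #|{: {ffun 'I_N -> traversal n k}}|
             <= wbar (X i) * rho := @upper _ (X i) N (HX i) HT HNpos eps He HA80.
        have L : (\big[Rplus/0]_(S : {ffun 'I_N -> traversal n k})
             Defs.ind (wbar (X i) - cnt (X i) S / INR N > eps)) / INR #|{: {ffun 'I_N -> traversal n k}}|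
             <= wbar (X i) * rho := @lower _ (X i) N (HX i) HT HNpos eps He HA80.
        lra. }
      rewrite sum_scale. have : 0 < rho by apply: exp_pos. move=> hr.
      apply: (Rle_trans _ (2 * rho * 1)); last lra.
      apply: Rmult_le_compat_l; [lra | exact: Hw]. }
    have Hrho : 2 * rho < delta.
    { have E : delta = exp (- ln (/ delta)).
        by rewrite ln_Rinv // Ropp_involutive exp_ln.
      have H7 : 2 * exp (-7) < 1.
      { have := exp_ineq1 1 ltac:(lra). have := exp_pos 1.
        have -> : exp (-7) = / exp 7 by rewrite -exp_Ropp; congr exp; lra.
        have : exp 1 <= exp 7 by apply: exp_le_mono; lra.
        move=> h1 h2 h3. apply: (Rmult_lt_reg_r (exp 7)); first lra.
        rewrite Rmult_assoc Rinv_l; lra. }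
      have : rho <= exp (-7) * delta.
      { rewrite [X in _ * X]E -exp_plus /rho; apply: exp_le_mono. rewrite /A in HA80 *. nra. }
      move=> h1; have h2 := exp_pos (-7). nra. }
    have Hb3 : 1 - \big[Rplus/0]_(i : 'I_m)
        ((\big[Rplus/0]_(S : {ffun 'I_N -> traversal n k})
             Defs.ind (cnt (X i) S / INR N - wbar (X i) > eps)) / INR #|{: {ffun 'I_N -> traversal n k}}|
        + (\big[Rplus/0]_(S : {ffun 'I_N -> traversal n k})
             Defs.ind (wbar (X i) - cnt (X i) S / INR N > eps)) / INR #|{: {ffun 'I_N -> traversal n k}}|)
       <= prob_samples (fun S : {ffun 'I_N -> traversal n k} =>
      forall i : 'I_m,
        Rabs (cfreq p eps z med S i - what p eps z med i) <= eps) := Hb''.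
    lra.
Qed.
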